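(* Let $G$ be a strongly chordal finite simple graph with at least one edge. Then $G$ has a simplicial edge $e$ such that $G\setminus e$ is strongly chordal. Moreover, $e$ can be chosen so that, in addition, if $G$ is claw-free then $G\setminus e$ is claw-free.
   Context: A graph is chordal if it has no induced cycle of length at least $4$. A perfect elimination order of $G$ is an ordering $v_1,\dots,v_n$ of the vertices such that whenever $v_iv_j,v_iv_k\in E(G)$ with $i<j,k$, then $v_jv_k\in E(G)$. A strong elimination order is a perfect elimination order such that whenever $v_iv_k, v_kv_j, v_iv_\ell\in E(G)$ with $i<k<\ell$ and $i<j$, then $v_jv_\ell\in E(G)$. $G$ is strongly chordal if it has a strong elimination order. A clique is a set of vertices inducing a complete graph. For a chordal graph $G$, a simplicial edge is an edge $e$ contained in exactly one maximal clique of $G$ and such that $G\setminus e$ (delete the edge, keep all vertices) is chordal. The claw is $K_{1,3}$; claw-free means no induced claw. *)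

(* Defs.v *)
From mathcomp Require Import all_boot.
Set Implicit Arguments. Unset Strict Implicit. Unset Printing Implicit Defensive.

Definition simple_graph (T : finType) (e : rel T) : Prop :=
  symmetric e /\ irreflexive e.

Definition del_edge (T : finType) (e : rel T) (u v : T) : rel T :=
  fun x y => e x y && ~~ (((x == u) && (y == v)) || ((x == v) && (y == u))).

(* Induced cycle of length >= 4, given as a duplicate-free sequence of
   vertices c_0, ..., c_{n-1}: c_i c_j adjacent iff i, j are cyclically
   consecutive. *)
Definition induced_cycle (T : finType) (e : rel T) (c : seq T) : Prop :=
  [/\ uniq c, 4 <= size c &
      forall x0 i j, i < size c -> j < size c -> i != j ->
        e (nth x0 c i) (nth x0 c j) =
          ((j == i.+1 %% size c) || (i == j.+1 %% size c))].

Definition chordal (T : finType) (e : rel T) : Prop :=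
  forall c : seq T, ~ induced_cycle e c.

Definition vertex_order (T : finType) (s : seq T) : Prop :=
  uniq s /\ forall x : T, x \in s.

Definition perfect_elim_order (T : finType) (e : rel T) (s : seq T) : Prop :=
  vertex_order s /\
  forall vi vj vk : T,
    index vi s < index vj s -> index vi s < index vk s ->
    e vi vj -> e vi vk -> vj != vk -> e vj vk.

Definition strong_elim_order (T : finType) (e : rel T) (s : seq T) : Prop :=
  perfect_elim_order e s /\
  forall vi vj vk vl : T,
    index vi s < index vk s -> index vk s < index vl s ->
    index vi s < index vj s ->
    e vi vk -> e vk vj -> e vi vl -> vj != vl -> e vj vl.

Definition strongly_chordal (T : finType) (e : rel T) : Prop :=
  exists s : seq T, strong_elim_order e s.

Definition clique (T : finType) (e : rel T) (Q : {set T}) : Prop :=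
  forall x y, x \in Q -> y \in Q -> x != y -> e x y.

Definition maximal_clique (T : finType) (e : rel T) (Q : {set T}) : Prop :=
  clique e Q /\ forall Q' : {set T}, clique e Q' -> Q \subset Q' -> Q' = Q.

Definition simplicial_edge (T : finType) (e : rel T) (u v : T) : Prop :=
  [/\ e u v,
      (exists! Q : {set T}, maximal_clique e Q /\ u \in Q /\ v \in Q) &
      chordal (del_edge e u v)].

Definition claw_free (T : finType) (e : rel T) : Prop :=
  ~ exists c a b d : T,
      [/\ e c a, e c b, e c d,
          [/\ a != b, a != d & b != d] &
          [/\ ~~ e a b, ~~ e a d & ~~ e b d]].

(* Main.v *)
Require Import Defs.
From mathcomp Require Import all_boot.
From mathcomp Require Import zify.

Lemma modS_if (i n : nat) : i < n -> i.+1 %% n = if i.+1 == n then 0 else i.+1.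
Proof.
move=> lt; case: eqP => [->|ne]; first by rewrite modnn.
by rewrite modn_small //; lia.
Qed.

Ltac lif := repeat (case: ifP => /eqP ?); lia.

Lemma peo_chordal (T : finType) (e : rel T) (s : seq T) :
  perfect_elim_order e s -> chordal e.
Proof.
move=> [[us alls] peo] c [uc sz ce].
have [x0 _] : exists x0 : T, True by case: (c) sz => [|x ?] //; exists x.
set n := size c in sz ce.
have n0 : 0 < n by lia.
pose F := fun i : 'I_n => index (nth x0 c i) s.
case: (arg_minnP F (i0 := Ordinal n0) (P := xpredT) isT) => [[i0 Hi0]] _ /= imin.
have inj : forall i j, i < n -> j < n -> index (nth x0 c i) s = index (nth x0 c j) s -> i = j.
  move=> i j hi hj /index_inj-h; apply/eqP; rewrite -(nth_uniq x0 hi hj uc).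
  by apply/eqP; apply: h.
have lt_of : forall j, j < n -> j != i0 -> index (nth x0 c i0) s < index (nth x0 c j) s.
  move=> j hj nj; have := imin (Ordinal hj) isT; rewrite /F /= leq_eqVlt.
  case/orP=> // /eqP /(inj _ _ Hi0 hj) h; by rewrite h eqxx in nj.
pose i1 := if i0.+1 == n then 0 else i0.+1.
pose i2 := if i0 == 0 then n.-1 else i0.-1.
have h1 : i1 < n by rewrite /i1; lif.
have h2 : i2 < n by rewrite /i2; lif.
have n10 : i1 != i0 by rewrite /i1; lif.
have n20 : i2 != i0 by rewrite /i2; lif.
have n12 : i1 != i2 by rewrite /i1 /i2; lif.
have e1 : e (nth x0 c i0) (nth x0 c i1).
  by rewrite ce 1?eq_sym // !modS_if //; rewrite /i1; lif.
have e2 : e (nth x0 c i0) (nth x0 c i2).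
  by rewrite ce 1?eq_sym // !modS_if //; rewrite /i2; lif.
have ne12 : nth x0 c i1 != nth x0 c i2 by rewrite (nth_uniq x0 h1 h2 uc).
have := peo _ _ _ (lt_of _ h1 n10) (lt_of _ h2 n20) e1 e2 ne12.
rewrite ce // !modS_if //; rewrite /i1 /i2; case: (i0.+1 =P n) => ?; case: (i0 =P 0) => ? /=; lif.
Qed.

Lemma del_sym (T : finType) (e : rel T) a b :
  symmetric e -> symmetric (del_edge e a b).
move=> sy x y; rewrite /del_edge sy; by case: (x == a); case: (x == b); case: (y == a); case: (y == b); rewrite /= ?andbT ?andbF ?orbF.


Qed.

Lemma del_strong (T : finType) (e : rel T) (s : seq T) a b :
  strong_elim_order e s ->
  (forall x y, e x y -> index a s <= index x s) ->
  strong_elim_order (del_edge e a b) s.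
Proof.
move=> [[vo peo] str] amin.
have K : forall w x y, e w x -> index w s < index y s -> y != a.
  move=> w x y ewx lt; apply/eqP=> ya; have := amin _ _ ewx; rewrite -ya; lia.
split; first split=> //.
  move=> vi vj vk lj lk /andP[eij _] /andP[eik _] njk.
  rewrite /del_edge (peo _ _ _ lj lk eij eik njk) /=.
  by rewrite (negbTE (K _ _ _ eij lj)) (negbTE (K _ _ _ eij lk)) andbF.
move=> vi vj vk vl lik lkl lij /andP[eik _] /andP[ekj _] /andP[eil _] njl.
rewrite /del_edge (str _ _ _ _ lik lkl lij eik ekj eil njl) /=.
have lil : index vi s < index vl s by lia.
by rewrite (negbTE (K _ _ _ eik lij)) (negbTE (K _ _ _ eik lil)) andbF.
Qed.

Lemma del_out (T : finType) (e : rel T) a b p r :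
  r != a -> r != b -> del_edge e a b p r = e p r.
Proof. by move=> ra rb; rewrite /del_edge (negbTE ra) (negbTE rb) !andbF /= andbT. Qed.

Theorem lemma2p5 (T : finType) (e : rel T) :
  simple_graph e ->
  strongly_chordal e ->
  (exists x y : T, e x y) ->
  exists u v : T,
    [/\ simplicial_edge e u v,
        strongly_chordal (del_edge e u v) &
        (claw_free e -> claw_free (del_edge e u v))].
Proof.
move=> [sy irr] [s sso] [x0 [y0 exy0]].
have [[[us ins] peo] str] := sso.
have iinj : forall x y, index x s = index y s -> x = y.
  move=> x y; have := @index_inj _ x s x y (ins x) (ins y). by [].
have neq : forall x y, e x y -> x != y.
  by move=> x y exy; apply/eqP=> xy; rewrite xy irr in exy.
have P0 : [exists y, e x0 y] by apply/existsP; exists y0.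
case: (@arg_minnP T x0 (fun x => [exists y, e x y]) (fun x => index x s) P0) => a /existsP[b0 eab0] amin'.
have amin : forall x y, e x y -> index a s <= index x s.
  by move=> x y exy; apply: amin'; apply/existsP; exists y.
case: (@arg_maxnP T b0 (e a) (fun y => index y s) eab0) => b eab bmax.
have ltA : forall y, e a y -> index a s < index y s.
  move=> y eay; have := amin _ _ (etrans (sy y a) eay).
  rewrite leq_eqVlt => /orP[/eqP/iinj ay|//].
  by move: (neq _ _ eay); rewrite ay eqxx.
have dso := @del_strong T e s a b sso amin.
exists a, b; split.
- split=> //; last by apply: (peo_chordal _ _ _ dso.1).
  pose Q := a |: [set y | e a y].
  have cQ : clique e Q.
    move=> x y; rewrite !inE => /orP[/eqP->|ax] /orP[/eqP->|ay] nxy //.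
    + by rewrite eqxx in nxy.
    + by rewrite sy.
    + exact: (peo _ _ _ (ltA _ ax) (ltA _ ay) ax ay nxy).
  have mQ : maximal_clique e Q.
    split=> // Q' cQ' sub; apply/eqP; rewrite eqEsubset sub andbT.
    apply/subsetP => y yQ'; rewrite !inE; case: (y =P a) => //= /eqP nya.
    apply: cQ' yQ' _; first by apply: (subsetP sub); rewrite !inE eqxx.
    by rewrite eq_sym.
  exists Q; split; first by split=> //; rewrite !inE eqxx eab orbT.
  move=> Q' [[cQ' mQ'] [aQ' bQ']]; apply: mQ' => //.
  apply/subsetP => y yQ'; rewrite !inE; case: (y =P a) => //= /eqP nya.
  by apply: cQ' yQ' _ => //; rewrite eq_sym.
- by exists s.
- have L : forall c r, e c a -> e c b -> e c r -> r != a -> r != b ->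
        ~~ e a r -> ~~ e b r -> False.
    move=> c r eca ecb ecr ra rb nar nbr.
    have eac : e a c by rewrite sy.
    have l1 := ltA _ eac.
    have l2 : index c s < index b s.
      have bc : index c s <= index b s := bmax c eac; rewrite ltn_neqAle bc andbT; apply/eqP=> /iinj cb.
      by move: (neq _ _ ecb); rewrite cb eqxx.
    have l3 : index a s < index r s.
      have := amin _ _ (etrans (sy r c) ecr); rewrite leq_eqVlt.
      by case/orP=> // /eqP/iinj ar; rewrite ar eqxx in ra.
    have := str _ _ _ _ l1 l2 l3 eac ecr eab rb.
    by rewrite sy (negbTE nbr).
  move=> cf [c [x [y [z [ecx ecy ecz [nxy nxz nyz] [exy exz eyz]]]]]].
  have H : forall p q r, e c p -> e c q -> e c r -> p != r -> q != r ->
      ~~ del_edge e a b p r -> ~~ del_edge e a b q r ->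
      ~~ del_edge e a b p q -> ~~ e p q.
    move=> p q r ecp ecq ecr pr qr npr nqr.
    rewrite /del_edge negb_and negbK => /orP[//|].
    case/orP=> /andP[/eqP pa /eqP qb]; subst p q.
    + have ra : r != a by rewrite eq_sym.
      have rb : r != b by rewrite eq_sym.
      by case: (L c r ecp ecq ecr ra rb); rewrite -(del_out _ e a b _ _ ra rb).
    + have ra : r != a by rewrite eq_sym.
      have rb : r != b by rewrite eq_sym.
      by case: (L c r ecq ecp ecr ra rb); rewrite -(del_out _ e a b _ _ ra rb).
  have dsy := del_sym _ _ a b sy.
  move: ecx ecy ecz => /andP[ecx _] /andP[ecy _] /andP[ecz _].
  apply: cf; exists c, x, y, z; split => //.
  split.
  + by apply: (H x y z).
  + by apply: (H x z y) => //; rewrite 1?eq_sym // dsy.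
  + by apply: (H y z x) => //; rewrite 1?eq_sym // dsy.
Qed.
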